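(* Let $a\in A\subseteq\mathbf{R}^n$, $C\in\mathbf{R}$, and let $f:\mathbf{R}^n\to\mathcal{P}(\mathbf{R}^n)$ be a multivalued map such that $\Theta^n(\mathscr{L}^n\llcorner(\mathbf{R}^n\setminus A),a)=0$, $f(b)$ is a singleton for every $b\in A$, $f|A$ is differentiable at $a$, and $$|f(b)-y|\le C|b-c|\quad\text{whenever }b\in A,\ c\in\mathbf{R}^n,\ y\in f(c).$$ Then $f$ is strongly differentiable at $a$.
   Context: $\mathcal{P}(\mathbf{R}^n)$ is the power set. $\Theta^n(\mu,x)=\lim_{r\downarrow0}\mu(\mathbf{B}(x,r))/(\alpha(n)r^n)$ (Euclidean closed balls). For a multivalued $T$ and a set $A$, $T|A$ is the multivalued map equal to $T$ on $A$ and to $\varnothing$ off $A$; a singleton value is identified with its element. A multivalued map $T$ from $\mathbf{R}^n$ to $\mathbf{R}^m$ is differentiable at $a$ if $T(a)$ is a singleton and there exists a linear $L$ such that for every $\varepsilon>0$ there is $\delta>0$ with $|y-T(a)-L(x-a)|\le\varepsilon|x-a|$ whenever $|x-a|\le\delta$ and $y\in T(x)$; it is strongly differentiable at $a$ if it is differentiable at $a$ and such $L$ is unique. *)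

(* Defs.v *)
From HB Require Import structures.
From mathcomp Require Import all_boot all_order all_algebra.
From mathcomp Require Import all_classical all_reals all_analysis.
Set Implicit Arguments. Unset Strict Implicit. Unset Printing Implicit Defensive.
Import Order.TTheory GRing.Theory Num.Theory.
Import numFieldNormedType.Exports.
Local Open Scope classical_set_scope.
Local Open Scope ring_scope.

Section Defs.
Variable R : realType.

Definition enorm (n : nat) (v : 'rV[R]_n) : R :=
  Num.sqrt (\sum_(i < n) (v ord0 i) ^+ 2).

Definition cball (n : nat) (x : 'rV[R]_n) (r : R) : set 'rV[R]_n :=
  [set y | enorm (y - x) <= r].

Definition box (n : nat) (a b : 'rV[R]_n) : set 'rV[R]_n :=
  [set x | forall i : 'I_n, a ord0 i <= x ord0 i <= b ord0 i].
Definition boxvol (n : nat) (a b : 'rV[R]_n) : R :=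
  \prod_(i < n) (b ord0 i - a ord0 i).

Definition leb_outer (n : nat) (A : set 'rV[R]_n) : \bar R :=
  ereal_inf [set s : \bar R | exists a b : nat -> 'rV[R]_n,
     [/\ (forall k (i : 'I_n), a k ord0 i <= b k ord0 i),
         A `<=` \bigcup_k box (a k) (b k) &
         s = (\sum_(0 <= k <oo) (boxvol (a k) (b k))%:E)%E]].

Definition alpha (n : nat) : R := fine (leb_outer (cball (0 : 'rV[R]_n) 1)).

Definition density_is (n : nat) (mu : set 'rV[R]_n -> \bar R)
  (x : 'rV[R]_n) (l : \bar R) : Prop :=
  ((fun r : R => mu (cball x r) * ((alpha n * r ^+ n)^-1)%:E)%E
     @ 0^'+ --> l).

Definition leb_restr (n : nat) (E : set 'rV[R]_n) : set 'rV[R]_n -> \bar R :=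
  fun S => leb_outer (S `&` E).

Definition mvrestr (n m : nat) (T : 'rV[R]_n -> set 'rV[R]_m) (A : set 'rV[R]_n)
  : 'rV[R]_n -> set 'rV[R]_m :=
  fun x => [set y | A x /\ T x y].

Definition mv_deriv_at (n m : nat) (T : 'rV[R]_n -> set 'rV[R]_m)
  (a : 'rV[R]_n) (L : 'M[R]_(n, m)) : Prop :=
  exists b : 'rV[R]_m, T a = [set b] /\
    forall eps : R, 0 < eps -> exists2 delta : R, 0 < delta &
      forall x y, enorm (x - a) <= delta -> T x y ->
        enorm (y - b - (x - a) *m L) <= eps * enorm (x - a).

Definition mv_differentiable (n m : nat) (T : 'rV[R]_n -> set 'rV[R]_m)
  (a : 'rV[R]_n) : Prop :=
  (exists b, T a = [set b]) /\ exists L, mv_deriv_at T a L.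

Definition mv_strongly_differentiable (n m : nat) (T : 'rV[R]_n -> set 'rV[R]_m)
  (a : 'rV[R]_n) : Prop :=
  mv_differentiable T a /\
  forall L1 L2, mv_deriv_at T a L1 -> mv_deriv_at T a L2 -> L1 = L2.

End Defs.

(* Main.v *)
Require Import Defs.
From HB Require Import structures.
From mathcomp Require Import all_boot all_order all_algebra.
From mathcomp Require Import all_classical all_reals all_analysis.
From mathcomp Require Import ring lra.
From mathcomp Require Import finmap.
Import Order.TTheory GRing.Theory Num.Theory.
Import numFieldNormedType.Exports.
Local Open Scope classical_set_scope.
Local Open Scope ring_scope.
Set Implicit Arguments. Unset Strict Implicit. Unset Printing Implicit Defensive.

Section Norms.
Variable R : realType.
Definition N1 n (v : 'rV[R]_n) : R := \sum_i `|v ord0 i|.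

Lemma N1_ge0 n (v : 'rV[R]_n) : 0 <= N1 v.
Proof. by apply: sumr_ge0 => i _. Qed.

Lemma N1D n (v w : 'rV[R]_n) : N1 (v + w) <= N1 v + N1 w.
Proof. rewrite /N1 -big_split /=; apply: ler_sum => i _; rewrite mxE; exact: ler_normD. Qed.

Lemma N1N n (v : 'rV[R]_n) : N1 (- v) = N1 v.
Proof. by apply: eq_bigr => i _; rewrite mxE normrN. Qed.

Lemma N1B n (v w : 'rV[R]_n) : N1 (v - w) = N1 (w - v).
Proof. by rewrite -N1N opprB. Qed.

Lemma N1Z n (t : R) (v : 'rV[R]_n) : N1 (t *: v) = `|t| * N1 v.
Proof. rewrite /N1 mulr_sumr; apply: eq_bigr => i _; by rewrite mxE normrM. Qed.

Lemma coord_le_N1 n (v : 'rV[R]_n) i : `|v ord0 i| <= N1 v.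
Proof.
rewrite /N1 (bigD1 i) //= lerDl; by apply: sumr_ge0 => j _.
Qed.

Lemma N1_eq0 n (v : 'rV[R]_n) : N1 v <= 0 -> v = 0.
Proof.
move=> h; apply/rowP => i; rewrite mxE; apply/eqP; rewrite -normr_le0.
exact: le_trans (coord_le_N1 v i) h.
Qed.

Lemma enorm_ge0 n (v : 'rV[R]_n) : 0 <= enorm v.
Proof. exact: sqrtr_ge0. Qed.

Lemma coord_le_enorm n (v : 'rV[R]_n) i : `|v ord0 i| <= enorm v.
Proof.
rewrite /enorm -sqrtr_sqr ler_sqrt; last by apply: sumr_ge0 => j _; exact: sqr_ge0.
rewrite (bigD1 i) //= lerDl; by apply: sumr_ge0 => j _; exact: sqr_ge0.
Qed.

Lemma enorm_le_N1 n (v : 'rV[R]_n) : enorm v <= N1 v.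
Proof.
rewrite /enorm -[X in _ <= X]ger0_norm ?N1_ge0 // -sqrtr_sqr ler_sqrt ?sqr_ge0 //.
rewrite expr2 [X in _ <= X * _]/N1 mulr_suml; apply: ler_sum => i _.
have -> : v ord0 i ^+ 2 = `|v ord0 i| * `|v ord0 i| by rewrite -normrM -expr2 ger0_norm ?sqr_ge0.
apply: ler_wpM2l => //; exact: coord_le_N1.
Qed.

Lemma N1_le_enorm n (v : 'rV[R]_n) : N1 v <= n%:R * enorm v.
Proof.
rewrite /N1 (@le_trans _ _ (\sum_(i < n) enorm v)) //.
  by apply: ler_sum => i _; exact: coord_le_enorm.
by rewrite sumr_const card_ord mulr_natl.
Qed.

Definition ML n m (L : 'M[R]_(n, m)) : R := \sum_i \sum_j `|L i j|.

Lemma ML_ge0 n m (L : 'M[R]_(n, m)) : 0 <= ML L.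
Proof. by apply: sumr_ge0 => i _; apply: sumr_ge0. Qed.

Lemma N1_mul n m (v : 'rV[R]_n) (L : 'M[R]_(n, m)) : N1 (v *m L) <= ML L * N1 v.
Proof.
rewrite /N1 (@le_trans _ _ (\sum_j \sum_i `|v ord0 i| * `|L i j|)) //.
  apply: ler_sum => j _; rewrite mxE; apply: le_trans (ler_norm_sum _ _ _) _.
  by apply: ler_sum => i _; rewrite normrM.
rewrite exchange_big /= mulr_sumr; apply: ler_sum => i _.
rewrite -mulr_sumr [X in _ <= X]mulrC; apply: ler_wpM2l => //.
rewrite /ML (bigD1 i) //= lerDl; by apply: sumr_ge0 => k _; apply: sumr_ge0.
Qed.


Lemma div_le (k e : R) : 0 <= k -> 0 < e -> k * (e / (k+1)) <= e.
Proof. move=> k0 e0; rewrite mulrA ler_pdivrMr; last by lra. nra. Qed.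

Lemma minle1 (x y : R) : Num.min x y <= x.
Proof. by rewrite ge_min lexx. Qed.
Lemma minle2 (x y : R) : Num.min x y <= y.
Proof. by rewrite ge_min lexx orbT. Qed.

Lemma le0_eps (X K : R) : 0 <= K -> (forall e, 0 < e -> e <= 1 -> X <= e * K) -> X <= 0.
Proof.
move=> K0 h; rewrite leNgt; apply/negP => X0.
set e := Num.min 1 (X / (2 * (K + 1))).
have e0 : 0 < e.
  by rewrite lt_min ltr01 /= divr_gt0 //; lra.
have hX := h _ e0 (minle1 _ _).
have : e * (2 * (K + 1)) <= X.
  by rewrite -ler_pdivlMr ?minle2 //; lra.
have : 0 <= e * K by rewrite mulr_ge0 // ltW.
nra.
Qed.

Definition D1 n (T : 'rV[R]_n -> set 'rV[R]_n) a b (L : 'M[R]_n) :=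
  T a = [set b] /\ forall e : R, 0 < e -> exists2 d : R, 0 < d &
    forall x y, N1 (x - a) <= d -> T x y -> N1 (y - b - (x - a) *m L) <= e * N1 (x - a).

Lemma deriv_D1 n (T : 'rV[R]_n -> set 'rV[R]_n) a L :
  mv_deriv_at T a L -> exists b, D1 T a b L.
Proof.
case=> b [Tab h]; exists b; split => // e e0.
have e'0 : 0 < e / (n%:R + 1) by rewrite divr_gt0 //; lra.
have [d d0 hd] := h _ e'0; exists d => // x y hx Txy.
have hx' : enorm (x - a) <= d := le_trans (enorm_le_N1 _) hx.
apply: le_trans (N1_le_enorm _) _.
apply: le_trans (_ : n%:R * (e / (n%:R + 1) * N1 (x - a)) <= _).
  apply: ler_wpM2l => //; apply: le_trans (hd _ _ hx' Txy) _.
  by apply: ler_wpM2l; [lra| exact: enorm_le_N1].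
rewrite mulrA; apply: ler_wpM2r; [exact: N1_ge0| exact: div_le].
Qed.

Lemma D1_deriv n (T : 'rV[R]_n -> set 'rV[R]_n) a b L :
  D1 T a b L -> mv_deriv_at T a L.
Proof.
case=> Tab h; exists b; split => // e e0.
have e'0 : 0 < e / (n%:R + 1) by rewrite divr_gt0 //; lra.
have [d d0 hd] := h _ e'0.
have d'0 : 0 < d / (n%:R + 1) by rewrite divr_gt0 //; lra.
exists (d / (n%:R + 1)) => // x y hx Txy.
have hx' : N1 (x - a) <= d.
  apply: le_trans (N1_le_enorm _) _.
  apply: le_trans (_ : n%:R * (d / (n%:R + 1)) <= _); last exact: div_le.
  by apply: ler_wpM2l.
apply: le_trans (enorm_le_N1 _) _; apply: le_trans (hd _ _ hx' Txy) _.
apply: le_trans (_ : e / (n%:R + 1) * (n%:R * enorm (x - a)) <= _).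
  by apply: ler_wpM2l; [lra| exact: N1_le_enorm].
rewrite mulrA; apply: ler_wpM2r; [exact: enorm_ge0|].
by rewrite mulrC; apply: div_le.
Qed.

Lemma leb_mono n (S T : set 'rV[R]_n) : S `<=` T -> (leb_outer S <= leb_outer T)%E.
Proof.
move=> ST; apply: le_ereal_inf => s [a0 [b0 [h1 h2 h3]]].
by exists a0, b0; split => //; apply: subset_trans h2.
Qed.


Lemma prod_pert n (x : 'I_n -> R) (t : R) : (forall i, 0 <= x i) -> 0 <= t -> t <= 1 ->
  \prod_i (x i + t) <= \prod_i x i + t * (n%:R * \prod_i (x i + 1)).
Proof.
elim: n x => [|n IH] x x0 t0 t1.
  by rewrite !big_ord0 mul0r mulr0 addr0.
rewrite !big_ord_recr /=.
set x' := fun i : 'I_n => x (widen_ord (leqnSn n) i).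
have := IH x' (fun i => x0 _) t0 t1.
set Pt := \prod_(i < n) (x' i + t).
set P0 := \prod_(i < n) x' i.
set P1 := \prod_(i < n) (x' i + 1).
move=> hIH.
have hP0 : 0 <= P0 by apply: prodr_ge0 => i _; exact: x0.
have hPt : Pt <= P1 by apply: ler_prod => i _; apply/andP; split; [have := x0 (widen_ord (leqnSn n) i); rewrite /x'; lra| rewrite /x'; lra].
have hPt0 : 0 <= Pt by apply: prodr_ge0 => i _; have := x0 (widen_ord (leqnSn n) i); rewrite /x'; lra.
have xm := x0 ord_max.
set xm' := x ord_max in xm *.
have nn : 0 <= n%:R :> R by [].
have q1 : Pt * xm' <= (P0 + t * (n%:R * P1)) * xm' by apply: ler_wpM2r.
have q2 : t * Pt <= t * P1 by apply: ler_wpM2l.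
have q3 : 0 <= t * P1 by apply: mulr_ge0 => //; lra.
have q4 : 0 <= t * (n%:R * P1 * xm') by rewrite mulr_ge0 // mulr_ge0 // mulr_ge0 //; lra.
rewrite -[(n.+1)%:R]natr1.
have -> : Pt * (xm' + t) = Pt * xm' + t * Pt by ring.
have -> : P0 * xm' + t * ((n%:R + 1) * (P1 * (xm' + 1))) =
   P0 * xm' + t * (n%:R * P1) * xm' + t * P1 + (t * (n%:R * P1) + t * P1 * xm') by ring.
have q5 : 0 <= t * (n%:R * P1) by rewrite mulr_ge0 // mulr_ge0 //; lra.
have q6 : 0 <= t * P1 * xm' by rewrite mulr_ge0.
have e1 : (P0 + t * (n%:R * P1)) * xm' = P0 * xm' + t * (n%:R * P1) * xm' by ring.
rewrite e1 in q1.
lra.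
Qed.

Lemma count_le (P : nat -> bool) (u v : R) m : u <= v ->
  (forall j, P j -> u <= j%:R <= v) -> \sum_(j < m) (P j)%:R <= v - u + 1.
Proof.
move=> uv hP.
suff : forall m, \sum_(j < m) ((P j)%:R : R) = 0 \/
   (\sum_(j < m) ((P j)%:R : R) <= m%:R - u /\ \sum_(j < m) ((P j)%:R : R) <= v - u + 1).
  by move=> /(_ m) [->|[]//]; lra.
elim=> [|k IH]; first by left; rewrite big_ord0.
rewrite big_ord_recr /=.
case Pk: (P k); rewrite /= ?mulr1n ?mulr0n; last first.
  rewrite addr0; case: IH => [->|[h1 h2]]; first by left.
  by right; split => //; rewrite -natr1; lra.
have := hP _ Pk => /andP[uk kv].
right; rewrite -natr1; case: IH => [->|[h1 h2]]; split; lra.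
Qed.


Lemma FC_N n (al : 'rV[R]_n) (h : R) K (a b : nat -> 'rV[R]_n) N :
  0 < h -> (0 < N)%N -> (forall k i, a k ord0 i <= b k ord0 i) ->
  (forall y : 'rV[R]_n, (forall i, al ord0 i <= y ord0 i <= al ord0 i + h) ->
     exists k, (k < K)%N /\ box (a k) (b k) y) ->
  h ^+ n <= \sum_(k < K) \prod_i ((b k ord0 i - a k ord0 i) + h / N%:R).
Proof.
move=> h0 N0 ab hcov.
have N0' : 0 < N%:R :> R by rewrite ltr0n.
set F := fun (k : 'I_K) (i : 'I_n) (j : nat) =>
  ((nat_of_bool (a k ord0 i <= al ord0 i + j%:R * h / N%:R <= b k ord0 i)%R)%:R : R).
have hA : forall g : {ffun 'I_n -> 'I_N.+1}, 1 <= \sum_(k < K) \prod_i F k i (g i).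
  move=> g.
  set y := \row_i (al ord0 i + (g i)%:R * h / N%:R) : 'rV[R]_n.
  have [k [hk hb]] : exists k, (k < K)%N /\ box (a k) (b k) y.
    apply: hcov => i; rewrite mxE.
    have gi : (g i)%:R <= N%:R :> R by rewrite ler_nat -ltnS ltn_ord.
    have q0 : 0 <= (g i)%:R * h / N%:R by rewrite divr_ge0 // mulr_ge0 // ltW.
    have q1 : (g i)%:R * h / N%:R <= h.
      by rewrite ler_pdivrMr // mulrC ler_wpM2l // ltW.
    by apply/andP; split; lra.
  rewrite (bigD1 (Ordinal hk)) //= ; apply: le_trans (_ : \prod_i F (Ordinal hk) i (g i) <= _).
    rewrite le_eqVlt; apply/orP; left; apply/eqP; rewrite big1 // => i _.
    by rewrite /F; have := hb i; rewrite /y mxE => ->.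
  rewrite lerDl; apply: sumr_ge0 => k' _; apply: prodr_ge0 => i _; exact: ler0n.
have hB : (N.+1 ^ n)%:R <= \sum_(k < K) \prod_i \sum_(j < N.+1) F k i j.
  apply: le_trans (_ : \sum_(g : {ffun 'I_n -> 'I_N.+1}) (1 : R) <= _).
    by rewrite sumr_const card_ffun !card_ord.
  apply: le_trans (ler_sum _ (fun g _ => hA g)) _.
  rewrite exchange_big /=; apply: ler_sum => k _.
  by rewrite (bigA_distr_bigA (fun i (j : 'I_N.+1) => F k i j)).
have hC : forall (k : 'I_K) i, \sum_(j < N.+1) F k i j <=
    N%:R / h * ((b k ord0 i - a k ord0 i) + h / N%:R).
  move=> k i.
  set P := fun j : nat => (a k ord0 i <= al ord0 i + j%:R * h / N%:R <= b k ord0 i).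
  set u := (a k ord0 i - al ord0 i) * (N%:R / h).
  set v := (b k ord0 i - al ord0 i) * (N%:R / h).
  have Nh : 0 <= N%:R / h by rewrite divr_ge0 // ltW.
  have uv : u <= v by apply: ler_wpM2r => //; have := ab k i; lra.
  have hP : forall j, P j -> u <= j%:R <= v.
    move=> j /andP[p1 p2].
    have ej : j%:R * h / N%:R * (N%:R / h) = j%:R.
      by field; apply/andP; split; rewrite gt_eqF.
    apply/andP; split.
      rewrite -ej; apply: ler_wpM2r => //; lra.
    rewrite -ej; apply: ler_wpM2r => //; lra.
  apply: le_trans (@count_le P u v N.+1 uv hP) _.
  rewrite le_eqVlt; apply/orP; left; apply/eqP; rewrite /u /v.
  by field; apply/andP; split; rewrite gt_eqF.
have hD : (N.+1 ^ n)%:R <= (N%:R / h) ^+ n *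
    \sum_(k < K) \prod_i ((b k ord0 i - a k ord0 i) + h / N%:R).
  apply: le_trans hB _; rewrite mulr_sumr; apply: ler_sum => k _.
  have -> : (N%:R / h) ^+ n = \prod_(i < n) (N%:R / h) by rewrite prodr_const card_ord.
  rewrite -big_split /=.
  apply: ler_prod => i _; rewrite hC andbT; apply: sumr_ge0 => j _; exact: ler0n.
have hE : N%:R ^+ n <= (N.+1 ^ n)%:R :> R.
  by rewrite natrX; apply: lerXn2r; rewrite ?nnegrE ?ler0n ?ler_nat.
have -> : h ^+ n = (h / N%:R) ^+ n * N%:R ^+ n.
  by rewrite -exprMn divfK // gt_eqF.
apply: le_trans (_ : (h / N%:R) ^+ n * ((N%:R / h) ^+ n *
    \sum_(k < K) \prod_i ((b k ord0 i - a k ord0 i) + h / N%:R)) <= _).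
  apply: ler_wpM2l; first by rewrite exprn_ge0 // divr_ge0 // ltW.
  exact: le_trans hE hD.
rewrite mulrA -exprMn (_ : h / N%:R * (N%:R / h) = 1) ?expr1n ?mul1r //.
by field; apply/andP; split; rewrite gt_eqF.
Qed.


Lemma FC n (al : 'rV[R]_n) (h : R) K (a b : nat -> 'rV[R]_n) :
  0 < h -> (forall k i, a k ord0 i <= b k ord0 i) ->
  (forall y : 'rV[R]_n, (forall i, al ord0 i <= y ord0 i <= al ord0 i + h) ->
     exists k, (k < K)%N /\ box (a k) (b k) y) ->
  h ^+ n <= \sum_(k < K) boxvol (a k) (b k).
Proof.
move=> h0 ab hcov.
set S := \sum_(k < K) boxvol (a k) (b k).
set M := \sum_(k < K) (n%:R * \prod_i ((b k ord0 i - a k ord0 i) + 1)).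
have M0 : 0 <= M.
  apply: sumr_ge0 => k _; apply: mulr_ge0 => //; apply: prodr_ge0 => i _.
  have := ab k i; lra.
have key : forall N, (0 < N)%N -> h <= N%:R -> h ^+ n <= S + h / N%:R * M.
  move=> N N0 hN.
  have N0' : 0 < N%:R :> R by rewrite ltr0n.
  apply: le_trans (FC_N h0 N0 ab hcov) _.
  rewrite /S /M mulr_sumr -big_split /=; apply: ler_sum => k _.
  apply: prod_pert.
  - by move=> i; have := ab k i; lra.
  - by rewrite divr_ge0 // ltW.
  - by rewrite ler_pdivrMr // mul1r.
rewrite leNgt; apply/negP => hS.
have g0 : 0 < h ^+ n - S by lra.
set X := h + M * h / (h ^+ n - S).
have q0 : 0 <= M * h / (h ^+ n - S) by rewrite divr_ge0 // ?mulr_ge0 // ltW.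
have X0 : 0 <= X by rewrite /X; lra.
have hX := archi_boundP X0.
set N := Num.Def.archi_bound X in hX.
have hN : h <= N%:R.
  rewrite /X in hX; lra.
have N0 : (0 < N)%N by rewrite -(ltr0n R); lra.
have N0' : 0 < N%:R :> R by rewrite ltr0n.
have := key N N0 hN.
have : h / N%:R * M < h ^+ n - S.
  rewrite mulrAC ltr_pdivrMr // -ltr_pdivrMl //.
  rewrite /X in hX.
  have : M * h / (h ^+ n - S) < N%:R by lra.
  by rewrite mulrC [h * M]mulrC mulrA.
lra.
Qed.


Lemma open_obox n (lo hi : 'rV[R]_n) :
  open [set y : 'rV[R]_n | forall i, lo ord0 i < y ord0 i < hi ord0 i].
Proof.
rewrite openE => y Oy; rewrite /interior.
apply: (@filter_forall _ _ (fun i (z : 'rV[R]_n) => lo ord0 i < z ord0 i < hi ord0 i) (nbhs y) (nbhs_filter y)) => i.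
have hc := @coord_continuous R 1 n ord0 i y.
apply: (hc [set r | lo ord0 i < r < hi ord0 i]).
have /andP[h1 h2] := Oy i.
apply: filterS2 (lt_nbhsr h1) (lt_nbhsl h2) => r /= p1 p2.
by rewrite p1 p2.
Qed.

Lemma boxvol_ge0 n (a b : 'rV[R]_n) : (forall i, a ord0 i <= b ord0 i) -> 0 <= boxvol a b.
Proof. by move=> ab; apply: prodr_ge0 => i _; rewrite subr_ge0. Qed.

Lemma LB n (al be : 'rV[R]_n) (h : R) : 0 < h -> (forall i, be ord0 i = al ord0 i + h) ->
  ((h ^+ n)%:E <= leb_outer (box al be))%E.
Proof.
move=> h0 hbe; rewrite /leb_outer; apply: le_ereal_inf_tmp => s [a [b [ab cov ->]]].
rewrite leNgt; apply/negP => hs.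
have u0 : forall k, (0 <= (boxvol (a k) (b k))%:E)%E.
  by move=> k; rewrite lee_fin; apply: boxvol_ge0 => i; exact: ab.
have S0 : (0 <= \sum_(0 <= k <oo) (boxvol (a k) (b k))%:E)%E.
  by apply: nneseries_ge0 => k _ _; exact: u0.
move: hs S0 (@nneseries_lim_ge R (fun k => (boxvol (a k) (b k))%:E) xpredT 0).
case: (\sum_(0 <= k <oo) (boxvol (a k) (b k))%:E)%E => [s'| |] //.
move=> hs s'0 hlim.
rewrite lte_fin in hs; rewrite lee_fin in s'0.
set g := h ^+ n - s'.
have g0 : 0 < g by rewrite /g; lra.
set e := fun k : nat => g / 2 / (2 ^ k.+1)%:R.
have e0 : forall k, 0 < e k by move=> k; rewrite /e !divr_gt0 // ltr0n expn_gt0.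
set P := fun k : nat => \prod_i ((b k ord0 i - a k ord0 i) + 1).
have P0 : forall k, 0 < P k.
  by move=> k; apply: prodr_gt0 => i _; have := ab k i; lra.
set d := fun k => Num.min (1 / 2) (e k / (2 * (n%:R + 1) * P k)).
have d0 : forall k, 0 < d k.
  move=> k; rewrite lt_min; apply/andP; split; first by lra.
  by rewrite divr_gt0 // mulr_gt0 // mulr_gt0 //; lra.
have d1 : forall k, 2 * d k <= 1.
  by move=> k; have := minle1 (1 / 2) (e k / (2 * (n%:R + 1) * P k)); rewrite -/(d k); lra.
have dP : forall k, 2 * d k * (n%:R * P k) <= e k.
  move=> k; have := minle2 (1 / 2) (e k / (2 * (n%:R + 1) * P k)); rewrite -/(d k).
  rewrite ler_pdivlMr; last by rewrite mulr_gt0 // mulr_gt0 //; lra.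
  have := P0 k; have := e0 k; have := d0 k; have : 0 <= n%:R :> R by [].
  move: (d k) (P k) (e k) (n%:R : R) => dd pp ee nn; nra.
set a' := fun k => a k - const_mx (d k).
set b' := fun k => b k + const_mx (d k).
have vol' : forall k, boxvol (a' k) (b' k) <= boxvol (a k) (b k) + e k.
  move=> k; rewrite /boxvol.
  have -> : \prod_i (b' k ord0 i - a' k ord0 i) = \prod_i ((b k ord0 i - a k ord0 i) + 2 * d k).
    by apply: eq_bigr => i _; rewrite !mxE; ring.
  apply: le_trans (prod_pert (x := fun i => b k ord0 i - a k ord0 i) (t := 2 * d k) _ _ _) _.
  - by move=> i; have := ab k i; lra.
  - by have := d0 k; lra.
  - exact: d1.
  by apply: lerD => //; exact: dP.
set O := fun k => [set y : 'rV[R]_n | forall i, a' k ord0 i < y ord0 i < b' k ord0 i].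
have cQ : compact (box al be).
  have -> : box al be = [set v : 'rV[R]_n | forall i, `[al ord0 i, be ord0 i]%classic (v ord0 i)].
    apply/seteqP; split => v hv i /=.
      by rewrite in_itv; exact: hv.
    by have := hv i; rewrite /= in_itv.
  exact: (rV_compact (fun i => @segment_compact R (al ord0 i) (be ord0 i))).
rewrite compact_cover in cQ.
have hcov' : box al be `<=` cover setT O.
  move=> y /cov [k _ hk]; exists k => // i.
  have /andP[q1 q2] := hk i; have := d0 k.
  by move=> dk; rewrite /a' /b' !mxE; apply/andP; split; lra.
have [D' _ hD'] := cQ nat setT O (fun k _ => @open_obox n (a' k) (b' k)) hcov'.
set K := ((\max_(k <- D') k)%N).+1.
have hK : forall k, k \in D' -> (k < K)%N.
  by move=> k kD; rewrite ltnS; exact: (@leq_bigmax_seq _ _ xpredT (fun k => k) k kD).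
have hFC := @FC n al h K a' b' h0.
have ab' : forall k i, a' k ord0 i <= b' k ord0 i.
  by move=> k i; rewrite /a' /b' !mxE; have := ab k i; have := d0 k; lra.
have cov' : forall y : 'rV[R]_n, (forall i, al ord0 i <= y ord0 i <= al ord0 i + h) ->
     exists k, (k < K)%N /\ box (a' k) (b' k) y.
  move=> y hy.
  have : box al be y by move=> i; rewrite hbe; exact: hy.
  move=> /hD' [k kD Oky]; exists k; split; first exact: hK.
  by move=> i; have /andP[q1 q2] := Oky i; apply/andP; split; lra.
have H1 := hFC ab' cov'.
have H2 : \sum_(k < K) boxvol (a' k) (b' k) <= \sum_(k < K) boxvol (a k) (b k) + \sum_(k < K) e k.
  by rewrite -big_split; apply: ler_sum => k _; exact: vol'.
have H3 : \sum_(k < K) boxvol (a k) (b k) <= s'.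
  have := hlim K (fun k _ _ => u0 k); rewrite sumEFin lee_fin big_mkord; exact.
have H4 : \sum_(k < K) e k <= g / 2.
  have q := epsilon_trick0 (eps := g / 2) xpredT (ltW (divr_gt0 g0 (ltr0n R 2))).
  have q' := @nneseries_lim_ge R (fun k => (e k)%:E) xpredT 0 K (fun k _ _ => ltW (e0 k)).
  have := le_trans q' q; rewrite sumEFin lee_fin big_mkord; exact.
rewrite /g in H4; lra.
Qed.

Lemma alpha_pos m : 0 < @alpha R m.+1.
Proof.
set n := m.+1.
have n0 : 0 < n%:R :> R by rewrite ltr0n.
have lo : (((2 / n%:R) ^+ n)%:E <= leb_outer (cball (0 : 'rV[R]_n) 1))%E.
  have h0 : 0 < 2 / n%:R :> R by rewrite divr_gt0.
  have := @LB n (const_mx (- (1 / n%:R))) (const_mx (1 / n%:R)) (2 / n%:R) h0.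
  move=> /(_ _) hl; apply: le_trans (hl _) (leb_mono _).
    by move=> i; rewrite !mxE; field; rewrite gt_eqF.
  move=> y hy; rewrite /cball /= subr0.
  apply: le_trans (enorm_le_N1 _) _.
  apply: le_trans (_ : \sum_(i < n) (1 / n%:R) <= _).
    apply: ler_sum => i _; have := hy i; rewrite !mxE => /andP[q1 q2].
    by rewrite ler_norml q2 andbT; lra.
  by rewrite sumr_const card_ord -[X in X <= _]mulr_natr mul1r mulVf // gt_eqF.
have up : (leb_outer (cball (0 : 'rV[R]_n) 1) <= ((2 : R) ^+ n)%:E)%E.
  set a := fun k : nat => if k == 0%N then const_mx (-1) else (0 : 'rV[R]_n).
  set b := fun k : nat => if k == 0%N then const_mx 1 else (0 : 'rV[R]_n).
  have -> : ((2 : R) ^+ n)%:E = (\sum_(0 <= k <oo) (boxvol (a k) (b k))%:E)%E.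
    rewrite (@nneseries_split R _ 0 1).
      rewrite eseries0 ?adde0; last first.
        move=> k k1 _; rewrite /a /b; case: eqP => [k0|_]; first by rewrite k0 in k1.
        rewrite /boxvol big_ord_recr /= !mxE subrr mulr0 //.
      rewrite add0n big_nat1 /a /b /= /boxvol; congr (_%:E).
      rewrite (eq_bigr (fun=> 2)); last by move=> i _; rewrite !mxE; ring.
      by rewrite prodr_const card_ord.
    move=> k _; rewrite lee_fin; apply: boxvol_ge0 => i.
    by rewrite /a /b; case: eqP => _; rewrite !mxE //; lra.
  apply: ereal_inf_lbound; exists a, b; split => //.
    by move=> k i; rewrite /a /b; case: eqP => _; rewrite !mxE //; lra.
  move=> y hy; exists 0%N => // i; rewrite /a /b /= !mxE.
  have := coord_le_enorm y i; rewrite /cball /= subr0 in hy.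
  by rewrite -ler_norml => q; apply: le_trans q hy.
rewrite /alpha; move: lo up; case: (leb_outer _) => [r| |] //.
rewrite !lee_fin /= => q _; apply: lt_le_trans q; rewrite exprn_gt0 // divr_gt0 //.
Qed.

Lemma dens n (A : set 'rV[R]_n) a : A a ->
  density_is (leb_restr (~` A)) a 0%E ->
  forall eta : R, 0 < eta -> exists2 d : R, 0 < d &
    forall x, N1 (x - a) <= d -> exists b, A b /\ N1 (b - x) <= eta * N1 (x - a).
Proof.
move=> Aa hd eta eta0.
case: n A a Aa hd => [|m] A a Aa hd.
  exists 1 => // x _; exists a; split => //.
  by rewrite /N1 !big_ord0 mulr0.
set n := m.+1.
set e' := Num.min eta 1.
have e'0 : 0 < e' by rewrite lt_min eta0 ltr01.
have e'1 : e' <= 1 by apply: minle2.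
have e'e : e' <= eta by apply: minle1.
have al0 := alpha_pos m.
have n0 : 0 < n%:R :> R by rewrite ltr0n.
set c0 := (e' / n%:R) ^+ n / @alpha R n.
have c00 : 0 < c0 by rewrite divr_gt0 // exprn_gt0 // divr_gt0.
set g := fun r : R => (leb_restr (~` A) (cball a r) * ((@alpha R n * r ^+ n)^-1)%:E)%E.
have hnear : \forall r \near 0^'+, (g r < c0%:E)%E.
  have := @open_ereal_lt' R 0%E c0%:E; rewrite lte_fin => /(_ c00) H.
  exact: hd _ H.
have [de de0 hde] : exists2 de : R, 0 < de & forall r, 0 < r < de -> (g r < c0%:E)%E.
  apply: contrapT => H; move: hnear; apply/not_near_at_rightP => e.
  apply: contrapT => H2; apply: H; exists e%:num => // r /andP[r0 re].
  apply: contrapT => Pr; apply: H2; exists r => //.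
  by rewrite r0 add0r.
have de4 : 0 < de / 4 by rewrite divr_gt0.
exists (de / 4) => // x hx.
have := N1_ge0 (x - a); rewrite le_eqVlt => /orP [/eqP r0z | r0p].
  by exists a; split => //; rewrite N1B -r0z mulr0.
apply: contrapT => hno.
set r0 := N1 (x - a) in hx r0p hno *.
set s := e' * r0 / n%:R.
have s0 : 0 < s by rewrite divr_gt0 // mulr_gt0.
set al := x - const_mx s.
set be := x + const_mx s.
have hbe : forall i, be ord0 i = al ord0 i + 2 * s.
  by move=> i; rewrite !mxE; ring.
have hlb := LB (mulr_gt0 (ltr0n _ 2) s0) hbe.
have sub : box al be `<=` cball a (2 * r0) `&` ~` A.
  move=> y hy.
  have hy' : forall i, `|(y - x) ord0 i| <= s.
    move=> i; have := hy i; rewrite !mxE ler_norml => /andP[h1 h2].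
    apply/andP; split; lra.
  have Nyx : N1 (y - x) <= e' * r0.
    apply: le_trans (_ : \sum_(i < n) s <= _); first by apply: ler_sum => i _; exact: hy'.
    by rewrite sumr_const card_ord -[X in X <= _]mulr_natr /s divfK // gt_eqF.
  split.
    rewrite /cball /=; apply: le_trans (enorm_le_N1 _) _.
    have -> : y - a = (y - x) + (x - a) by rewrite addrA subrK.
    apply: le_trans (N1D _ _) _; rewrite -/r0.
    have : e' * r0 <= r0 by rewrite ler_piMl // ltW.
    lra.
  move=> Ay; apply: hno; exists y; split => //.
  apply: le_trans Nyx _; apply: ler_wpM2r => //; exact: ltW.
have hmono := leb_mono sub.
have r0de : 0 < 2 * r0 < de by apply/andP; split; lra.
have hg := hde _ r0de.
suff : (c0%:E <= g (2 * r0)%R)%E by rewrite leNgt hg.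
rewrite /g.
have ceq : c0 = (2 * s) ^+ n * (@alpha R n * (2 * r0) ^+ n)^-1.
  have -> : 2 * s = e' / n%:R * (2 * r0) by rewrite /s; field; rewrite gt_eqF.
  have hA : @alpha R n != 0 by rewrite gt_eqF.
  have hB : (2 * r0) ^+ n != 0 by rewrite expf_neq0 // gt_eqF //; lra.
  rewrite exprMn /c0; move: hA hB; move: (@alpha R n) ((2 * r0) ^+ n) => A0 B0 hA hB.
  by field; rewrite hA hB.
rewrite ceq EFinM; apply: lee_wpmul2r.
  by rewrite lee_fin invr_ge0 mulr_ge0 ?ltW // exprn_gt0 //; lra.
exact: le_trans hlb hmono.
Qed.
Lemma main n (A : set 'rV[R]_n) (a : 'rV[R]_n)
  (C : R) (f : 'rV[R]_n -> set 'rV[R]_n) :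
  A a ->
  density_is (leb_restr (~` A)) a 0%E ->
  (forall b, A b -> exists z, f b = [set z]) ->
  mv_differentiable (mvrestr f A) a ->
  (forall b c y z, A b -> f b z -> f c y -> enorm (z - y) <= C * enorm (b - c)) ->
  mv_strongly_differentiable f a.
Proof.
move=> Aa hd hs [_ [L /deriv_D1 [b [rab hL]]]] hlip.
have hD := dens Aa hd.
have fab : f a = [set b].
  rewrite -rab; apply/funext => y; apply/propext; rewrite /mvrestr /=; tauto.
set C' := n%:R * `|C|.
have C'0 : 0 <= C' by rewrite /C' mulr_ge0.
have lip : forall b' c y z, A b' -> f b' z -> f c y -> N1 (z - y) <= C' * N1 (b' - c).
  move=> b' c y z Ab fz fy; apply: le_trans (N1_le_enorm _) _.
  rewrite /C' -mulrA; apply: ler_wpM2l => //.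
  apply: le_trans (hlip _ _ _ _ Ab fz fy) _.
  apply: le_trans (_ : `|C| * enorm (b' - c) <= _).
    by apply: ler_wpM2r; [exact: enorm_ge0| exact: ler_norm].
  by apply: ler_wpM2l => //; exact: enorm_le_N1.
have fsing : forall b' z y, A b' -> f b' = [set z] -> f b' y -> y = z.
  by move=> b' z y _ -> .
split.
  split; first by exists b.
  exists L; apply: (@D1_deriv _ _ _ b); split => // e e0.
  set K := C' + ML L + 2.
  have K0 : 0 < K by rewrite /K; have := ML_ge0 L; lra.
  set e1 := Num.min 1 (e / K).
  have e10 : 0 < e1 by rewrite lt_min ltr01 divr_gt0.
  have e11 : e1 <= 1 by rewrite ge_min lexx.
  have e1K : e1 * K <= e.
    by rewrite -ler_pdivlMr // ge_min lexx orbT.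
  have [d1 d10 hd1] := hL _ e10.
  have [d2 d20 hd2] := hD _ e10.
  exists (Num.min d2 (d1 / 2)); first by rewrite lt_min d20 divr_gt0.
  move=> x y hx fxy.
  have hx2 : N1 (x - a) <= d2 by apply: le_trans hx _; rewrite ge_min lexx.
  have hx1 : N1 (x - a) <= d1 / 2 by apply: le_trans hx _; rewrite ge_min lexx orbT.
  have [b' [Ab' hb']] := hd2 _ hx2.
  have [z fz] := hs _ Ab'.
  have hxa0 := N1_ge0 (x - a).
  have hba : N1 (b' - a) <= d1.
    have -> : b' - a = (b' - x) + (x - a) by rewrite addrA subrK.
    apply: le_trans (N1D _ _) _.
    have : e1 * N1 (x - a) <= N1 (x - a) by rewrite ler_piMl.
    lra.
  have h1 := hd1 b' z hba (conj Ab' (eq_ind_r (fun S => S z) (erefl z) fz)).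
  have h2 := lip _ _ _ _ Ab' (eq_ind_r (fun S => S z) (erefl z) fz) fxy.
  have h3 := N1_mul (b' - x) L.
  have -> : y - b - (x - a) *m L = - (z - y) + (z - b - (b' - a) *m L) + (b' - x) *m L.
    have -> : (b' - a) *m L = (b' - x) *m L + (x - a) *m L.
      by rewrite -mulmxDl addrA subrK.
    move: ((b' - x) *m L) ((x - a) *m L) => P Q.
    by apply/rowP => i; rewrite !mxE; ring.
  apply: le_trans (N1D _ _) _.
  apply: le_trans (lerD (N1D _ _) (lexx _)) _.
  rewrite N1N.
  have hba' : N1 (b' - a) <= 2 * N1 (x - a).
    have -> : b' - a = (b' - x) + (x - a) by rewrite addrA subrK.
    apply: le_trans (N1D _ _) _.
    have : e1 * N1 (x - a) <= N1 (x - a) by rewrite ler_piMl.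
    lra.
  have hbx : N1 (b' - x) <= e1 * N1 (x - a) := hb'.
  have ML0 := ML_ge0 L.
  have hbx0 := N1_ge0 (b' - x).
  apply: le_trans (_ : e1 * K * N1 (x - a) <= _); last by apply: ler_wpM2r.
  rewrite /K.
  have : C' * N1 (b' - x) <= C' * (e1 * N1 (x - a)) by apply: ler_wpM2l.
  have : ML L * N1 (b' - x) <= ML L * (e1 * N1 (x - a)) by apply: ler_wpM2l.
  have : e1 * N1 (b' - a) <= e1 * (2 * N1 (x - a)) by apply: ler_wpM2l => //; lra.
  move=> q1 q2 q3.
  apply: le_trans (lerD (lerD (le_trans h2 q3) (le_trans h1 q1)) (le_trans h3 q2)) _.
  by rewrite le_eqVlt; apply/orP; left; apply/eqP; rewrite /C'; ring.
move=> L1 L2 /deriv_D1 [b1 [fb1 h1]] /deriv_D1 [b2 [fb2 h2]].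
have eb1 : b1 = b.
  have : f a b1 by rewrite fb1; reflexivity.
  by rewrite fab.
have eb2 : b2 = b.
  have : f a b2 by rewrite fb2; reflexivity.
  by rewrite fab.
subst b1 b2.
set D := L1 - L2.
suff hv : forall v : 'rV[R]_n, N1 (v *m D) <= 0.
  apply/eqP; rewrite -subr_eq0; apply/eqP/matrixP => i j.
  have := N1_eq0 (hv (delta_mx 0 i)); rewrite -rowE => /rowP /(_ j).
  by rewrite !mxE.
move=> v; apply: (@le0_eps _ ((4 + ML D) * N1 v)).
  by apply: mulr_ge0; [have := ML_ge0 D; lra| exact: N1_ge0].
move=> e e0 e1.
have [d1 d10 hd1] := h1 _ e0.
have [d2 d20 hd2] := h2 _ e0.
have [d3 d30 hd3] := hD _ e0.
set d := Num.min d1 (Num.min d2 d3) / 2.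
have d0 : 0 < d by rewrite divr_gt0 // !lt_min d10 d20 d30.
have dd1 : 2 * d <= d1 by rewrite /d mulrC divfK // ge_min lexx.
have dd2 : 2 * d <= d2 by rewrite /d mulrC divfK // !ge_min lexx !orbT.
have dd3 : d <= d3.
  have : 2 * d <= d3 by rewrite /d mulrC divfK // !ge_min lexx !orbT.
  lra.
have nv0 := N1_ge0 v.
set t := d / (N1 v + 1).
have t0 : 0 < t by rewrite divr_gt0 //; lra.
have tv : t * N1 v <= d.
  by rewrite /t mulrAC ler_pdivrMr; [nra| lra].
set x := a + t *: v.
have xa : x - a = t *: v by rewrite /x addrC addKr.
have Nxa : N1 (x - a) = t * N1 v by rewrite xa N1Z gtr0_norm.
have hx3 : N1 (x - a) <= d3 by rewrite Nxa; lra.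
have [b' [Ab' hb']] := hd3 x hx3.
have [z fz] := hs _ Ab'.
have fbz : f b' z by rewrite fz.
rewrite Nxa in hb'.
have hba : N1 (b' - a) <= 2 * (t * N1 v).
  have -> : b' - a = (b' - x) + (x - a) by rewrite addrA subrK.
  have tv0 : 0 <= t * N1 v by rewrite mulr_ge0 // ltW.
  have q : e * (t * N1 v) <= t * N1 v by rewrite ler_piMl.
  apply: le_trans (N1D _ _) _; rewrite Nxa; lra.
have hb1 : N1 (b' - a) <= d1 by lra.
have hb2 : N1 (b' - a) <= d2 by lra.
have k1 := hd1 _ _ hb1 fbz.
have k2 := hd2 _ _ hb2 fbz.
have ev : t *: (v *m D) = (z - b - (b' - a) *m L2) - (z - b - (b' - a) *m L1) - (b' - x) *m D.
  have e1' : b' - x = (b' - a) - t *: v.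
    by rewrite -xa; apply/rowP => i; rewrite !mxE; ring.
  rewrite e1'; move: (b' - a) => u.
  rewrite /D scalemxAl mulmxBl !mulmxBr.
  move: (u *m L1) (u *m L2) ((t *: v) *m L1) ((t *: v) *m L2) => P1 P2 Q1 Q2.
  by apply/rowP => i; rewrite !mxE; ring.
have hN : N1 (t *: (v *m D)) <= t * (e * ((4 + ML D) * N1 v)).
  rewrite ev; apply: le_trans (N1D _ _) _; rewrite N1N.
  apply: le_trans (lerD (N1D _ _) (lexx _)) _; rewrite N1N.
  have k3 := N1_mul (b' - x) D.
  have q1 : e * N1 (b' - a) <= e * (2 * (t * N1 v)) by apply: ler_wpM2l => //; lra.
  have q2 : ML D * N1 (b' - x) <= ML D * (e * (t * N1 v)) by apply: ler_wpM2l => //; exact: ML_ge0.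
  apply: le_trans (lerD (lerD (le_trans k2 q1) (le_trans k1 q1)) (le_trans k3 q2)) _.
  by rewrite le_eqVlt; apply/orP; left; apply/eqP; ring.
by move: hN; rewrite N1Z gtr0_norm // ler_pM2l.
Qed.
End Norms.

Theorem lemma2p38 (R : realType) (n : nat) (A : set 'rV[R]_n) (a : 'rV[R]_n)
  (C : R) (f : 'rV[R]_n -> set 'rV[R]_n) :
  A a ->
  density_is (leb_restr (~` A)) a 0%E ->
  (forall b, A b -> exists z, f b = [set z]) ->
  mv_differentiable (mvrestr f A) a ->
  (forall b c y z, A b -> f b z -> f c y -> enorm (z - y) <= C * enorm (b - c)) ->
  mv_strongly_differentiable f a.
Proof. exact: main. Qed.
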